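(* Let $\epsilon>0$ and let $E\subset[0,3/2-\epsilon]$ be a measurable set with Lebesgue measure $m(E)=1$, and suppose $E$ tiles $\mathbb{R}$ with respect to $\mathbb{Z}$. Then $\widehat{\chi_E}(\xi)\neq 0$ for all $\xi$ with $-1/2\leq\xi\leq 1/2$.
   Context: $E$ tiles $\mathbb{R}$ with respect to $\mathbb{Z}$ means $\sum_{k\in\mathbb{Z}}\chi_E(x-k)=1$ for almost every $x\in\mathbb{R}$, where $\chi_E$ is the indicator function of $E$. The Fourier transform is $\widehat{\chi_E}(\xi)=\int_E e^{-2\pi i x\xi}\,dx$. *)

(* Defs.v *)
From HB Require Import structures.
From mathcomp Require Import all_boot all_order all_algebra.
From mathcomp Require Import all_classical all_reals all_analysis.
From mathcomp Require Import complex.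
Set Implicit Arguments. Unset Strict Implicit. Unset Printing Implicit Defensive.
Import Order.TTheory GRing.Theory Num.Theory.
Import numFieldNormedType.Exports.
Local Open Scope classical_set_scope.
Local Open Scope ring_scope.

Definition tiles_by_Z (R : realType) (E : set R) : Prop :=
  {ae (@lebesgue_measure R), forall x : R,
     (\esum_(k in [set: int]) ((\1_E (x - k%:~R) : R)%:E) = 1)%E}.

(* Fourier transform of chi_E:  int_E e^{-2 pi i x xi} dx
   = int_E cos(2 pi x xi) dx - i int_E sin(2 pi x xi) dx  (value in R[i]). *)
Definition fourier_indic (R : realType) (E : set R) (xi : R) : R[i] :=
  Complex (Rintegral (@lebesgue_measure R) E (fun x => cos (2 * pi * x * xi)))
    (- Rintegral (@lebesgue_measure R) E (fun x => sin (2 * pi * x * xi))).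

(* Main.v *)
Require Import Defs.
From HB Require Import structures.
From mathcomp Require Import all_boot all_order all_algebra.
From mathcomp Require Import all_classical all_reals all_analysis.
From mathcomp Require Import complex.
From mathcomp Require Import measurable_realfun ring lra zify.
Import Order.TTheory GRing.Theory Num.Theory.
Import numFieldNormedType.Exports.
Local Open Scope classical_set_scope.
Local Open Scope ring_scope.
Section S.
Variable R : realType.
Local Notation mu := (@lebesgue_measure R).

Lemma lebesgue_measure_shift (a : R) (A : set R) : measurable A ->
  pushforward mu (fun x => x + a : measurableTypeR R) A = mu A.
Proof.
move=> mA; apply/esym/lebesgue_measure_unique => //=.
  by apply: measurable_funD => //; exact: measurable_cst.
move=> _ _ [[x y]] _ <-.
rewrite /pushforward.
have -> : (fun x => x + a) @^-1` `]x, y] = `](x - a), (y - a)]%classic.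
  by apply/seteqP; split => z /=; rewrite !in_itv/= ?ltrBlDr ?lerBrDr.
rewrite /= !lebesgue_measure_itv/= !lte_fin ltrD2r.
case: ifP => // _; rewrite -EFinB; congr (_%:E); ring.
Qed.

Lemma ge0_integral_shift (a : R) (D : set R) (f : R -> \bar R) :
  measurable D -> measurable_fun D f -> (forall x, D x -> (0 <= f x)%E) ->
  (\int[mu]_(x in D) f x = \int[mu]_(x in (fun x => x + a)%R @^-1` D) f (x + a)%R)%E.
Proof.
move=> mD mf f0.
have mphi : measurable_fun [set: measurableTypeR R] (fun x : measurableTypeR R => x + a : measurableTypeR R).
  by apply: measurable_funD => //; exact: measurable_cst.
have := ge0_integral_pushforward mphi mu mD mf.
rewrite /comp => <-; last by move=> y; rewrite inE; exact: f0.
by apply: eq_measure_integral => //= A mA AS; rewrite lebesgue_measure_shift.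
Qed.

Lemma key_ineq (E : set R) (e : R) (g : R -> R) :
  measurable E -> E `<=` `[0, 3 / 2 - e] -> 0 < e -> tiles_by_Z E ->
  continuous g -> (forall x, -1 <= g x) ->
  (forall x, 0 <= x -> x <= 1 / 2 - e -> g x <= g (x + 1)) ->
  (\int[mu]_(x in `[0%R, 1%R[) (g x + 1)%:E <= \int[mu]_(x in E) (g x + 1)%:E)%E.
Proof.
move=> mE Esub e0 tile cg gge.
set h := fun x => (g x + 1)%:E.
have mh : measurable_fun setT h.
  apply/measurable_EFinP; apply: measurable_funD; last exact: measurable_cst.
  exact: continuous_measurable_fun.
have h0 : forall x, (0 <= h x)%E by move=> x; rewrite lee_fin -lerBlDr sub0r.
have mphi : measurable_fun [set: measurableTypeR R] (fun x : measurableTypeR R => x + 1 : measurableTypeR R).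
  by apply: measurable_funD => //; exact: measurable_cst.
set I := `[0, 1[%classic : set R.
have mI : measurable I by exact: measurable_itv.
set A := E `&` I.
set B1 := E `\` I.
set B := I `&` (fun x => x + 1) @^-1` E.
have mA : measurable A by exact: measurableI.
have mB1 : measurable B1 by exact: measurableD.
have mB : measurable B.
  apply: measurableI => //.
  by have := mphi measurableT _ mE; rewrite setTI.
move=> gmono.
have mhD D : measurable_fun D h by exact: measurable_funS mh.
have mhs : measurable_fun [set: R] (fun x : R => h (x + 1)).
  apply/measurable_EFinP; apply: measurable_funD; last exact: measurable_cst.
  apply: continuous_measurable_fun => x; apply: continuous_comp; last exact: cg.
  by apply: continuousD => //; exact: cst_continuous.
have mhsD (D : set R) : measurable_fun D (fun x : R => h (x + 1)) by exact: measurable_funS mhs.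
have EAB : E = A `|` B1 by rewrite /A /B1 setUIDK.
have -> : (\int[mu]_(x in E) h x = \int[mu]_(x in A) h x + \int[mu]_(x in B1) h x)%E.
  have Hd : [disjoint A & B1].
    by apply/disj_set2P; rewrite /A /B1 setDE setIACA setICr setI0.
  have := ge0_integral_setU mu mA mB1 (mhD _) (fun x _ => h0 x) Hd.
  by rewrite -EAB.
set B1' := (fun x => x + 1) @^-1` B1.
have mB1' : measurable B1' by have := mphi measurableT _ mB1; rewrite setTI.
have -> : (\int[mu]_(x in B1) h x = \int[mu]_(x in B1') h (x + 1)%R)%E.
  by apply: ge0_integral_shift => // x _; exact: h0.
have BB1' : B `<=` B1'.
  move=> x [Ix Ex]; split => //= Ix1.
  move: Ix Ix1; rewrite /I /= !in_itv /= => /andP[x0 _] /andP[_]; lra.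
have le1 : (\int[mu]_(x in B) h x <= \int[mu]_(x in B1') h (x + 1)%R)%E.
  apply: (@le_trans _ _ (\int[mu]_(x in B) h (x + 1)%R)%E).
    apply: (ge0_le_integral mu mB (fun x _ => h0 x) (mhD _) (mhsD _)).
    move=> x [Ix Ex]; rewrite /h lee_fin lerD2r; apply: gmono.
      by move: Ix; rewrite /I /= in_itv /= => /andP[].
    by move: (Esub _ Ex); rewrite /= in_itv /= => /andP[_]; lra.
  exact: (ge0_subset_integral mu mB mB1' (mhsD _) (fun x _ => h0 _) BB1').
set N := I `\` (A `|` B).
have mN : measurable N by apply: measurableD => //; exact: measurableU.
have N0 : mu N = 0%E.
  case: tile => M [mM M0 NM].
  apply: (@subset_measure0 _ _ _ mu N M) => //.
  move=> x [Ix nAB]; apply: NM => /=.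
  rewrite esum1; first by move/eqP; rewrite eq_sym onee_eq0.
  move=> k _; rewrite indicE.
  have [xkE|nxkE] := pselect (E (x - k%:~R)); last by rewrite memNset.
  exfalso.
  have := Esub _ xkE; rewrite /= in_itv /= => /andP[xk0 xk1].
  move: (Ix); rewrite /I /= in_itv /= => /andP[x0 x1].
  have k1 : (k%:~R : R) < 1 by lra.
  have k2 : (-2 : R) < k%:~R by lra.
  have : (k < 1)%R by rewrite -(ltr_int R).
  have : (-2 < k)%R by rewrite -(ltr_int R).
  move=> ka kb.
  move: xkE; have [->|->] : k = 0 \/ k = -1 by lia.
    by move=> xkE; apply: nAB; left; split => //; rewrite subr0 in xkE.
  move=> xkE; apply: nAB; right; split => //=.
  by rewrite (_ : x + 1 = x - (-1)%:~R) // mulrNz opprK.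
have le2 : (\int[mu]_(x in I) h x <= \int[mu]_(x in A) h x + \int[mu]_(x in B) h x)%E.
  have sub : I `<=` (A `|` (B `\` A)) `|` N.
    move=> x Ix; have [Ax|nAx] := pselect (A x); first by left; left.
    have [Bx|nBx] := pselect (B x); first by left; right.
    by right; split => // -[].
  have mBA : measurable (B `\` A) by exact: measurableD.
  have mU : measurable ((A `|` (B `\` A)) `|` N).
    by apply: measurableU => //; exact: measurableU.
  apply: (le_trans (ge0_subset_integral mu mI mU (mhD _) (fun x _ => h0 x) sub)).
  have mABA : measurable (A `|` (B `\` A)) by exact: measurableU.
  have d1 : [disjoint (A `|` (B `\` A)) & N].
    apply/disj_set2P; apply/seteqP; split => // x [[Ax|[Bx _]] [_ nAB]]; apply: nAB.
      by left.
    by right.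
  have d2 : [disjoint A & (B `\` A)].
    by apply/disj_set2P; apply/seteqP; split => // x [Ax [_ nAx]].
  rewrite (ge0_integral_setU mu mABA mN (mhD _) (fun x _ => h0 x) d1).
  rewrite (@null_set_integral _ _ _ mu N h) //; last exact: (mhD N).
  rewrite addr0.
  rewrite (ge0_integral_setU mu mA mBA (mhD _) (fun x _ => h0 x) d2).
  apply: leeD2l; apply: (ge0_subset_integral mu mBA mB (mhD _) (fun x _ => h0 x)).
  by move=> x [].
apply: (le_trans le2); exact: leeD2l.
Qed.
Lemma lin_derive (a th x : R) : is_derive x 1 (fun y : R => a * y - th) a.
Proof.
have H : is_derive x 1 (fun y : R => a * y - th) (a *: (1:R) - 0).
  exact: is_deriveB.
by rewrite scaler1 subr0 in H.
Qed.

Lemma sin_lin_derive (a th x : R) :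
  is_derive x 1 (fun y : R => sin (a * y - th)) (cos (a * x - th) * a).
Proof.
have dl := lin_derive a th x.
have dsl : derivable (fun y : R => sin (a * y - th)) x 1.
  apply/derivable1_diffP.
  apply: (@differentiable_comp _ _ _ _ (fun y : R => a * y - th) sin).
    by apply/derivable1_diffP; exact: ex_derive.
  apply/derivable1_diffP; exact: ex_derive.
apply: (@is_derive_eq _ _ _ _ _ _ _ ('D_1 (fun y : R => sin (a * y - th)) x)).
  exact: derivableP.
rewrite -derive1E (@derive1_comp _ (fun y : R => a * y - th) sin).
- by rewrite !derive1E !derive_val.
- exact: ex_derive.
- exact: ex_derive.
Qed.

Lemma ftc_lin (a th : R) :
  (\int[mu]_(x in `[0%R, 1%R]) (cos (a * x - th) * a)%:E =
    (sin (a * 1 - th))%:E - (sin (a * 0 - th))%:E)%E.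
Proof.
have cF : continuous (fun y : R => sin (a * y - th)).
  move=> x; apply: differentiable_continuous; apply/derivable1_diffP.
  exact: (@ex_derive _ _ _ _ _ _ _ (sin_lin_derive a th x)).
rewrite (@continuous_FTC2 _ _ (fun y : R => sin (a * y - th))) //.
- apply/continuous_subspaceT => x.
  apply: continuousM; last exact: cst_continuous.
  apply: continuous_comp; last exact: continuous_cos.
  apply: continuousB; last exact: cst_continuous.
  apply: continuousM; [exact: cst_continuous | exact: id].
- split.
  + by move=> x _; exact: @ex_derive _ _ _ _ _ _ _ (sin_lin_derive a th x).
  + by apply: cvg_at_right_filter; exact: cF.
  + by apply: cvg_at_left_filter; exact: cF.
  + by move=> x _; rewrite derive1E (@derive_val _ _ _ _ _ _ _ (sin_lin_derive a th x)).
Qed.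

Lemma intg (D : set R) (f : R -> R) : measurable D -> (mu D < +oo)%E ->
  continuous f -> (forall x, `|f x| <= 1) -> mu.-integrable D (EFin \o f).
Proof.
move=> mD Dfin cf fb; apply: measurable_bounded_integrable => //.
  exact: measurable_funS (continuous_measurable_fun cf).
exists 1; split => // M M1 x _ /=; apply: (le_trans (fb x)); exact: ltW.
Qed.

Lemma cos_le (u v : R) : 0 <= u -> u <= v -> v <= pi -> cos v <= cos u.
Proof.
move=> u0 uv vpi; have [->//|uv'] := eqVneq u v.
have ltuv : u < v by rewrite lt_neqAle uv' uv.
apply: ltW; rewrite ltr_cos //; rewrite in_itv /= ?u0 ?vpi ?(le_trans u0 uv) ?(le_trans uv vpi) //.
Qed.

Lemma sinpos (b e : R) : 0 < b -> b <= pi -> 0 < e -> e <= 1 / 2 ->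
  0 < sin (b * e) + sin (b * (1 - e)).
Proof.
move=> b0 bpi e0 e2; apply: addr_gt0; apply: sin_gt0_pi; apply/andP; split.
- exact: mulr_gt0.
- apply: (lt_le_trans _ bpi); rewrite -[ltRHS]mulr1 ltr_pM2l //; lra.
- by apply: mulr_gt0 => //; lra.
- apply: (lt_le_trans _ bpi); rewrite -[ltRHS]mulr1 ltr_pM2l //; lra.
Qed.
End S.

Theorem lemma3p2 (R : realType) (eps : R) (E : set R) :
  0 < eps ->
  measurable E ->
  E `<=` `[0, 3 / 2 - eps] ->
  (@lebesgue_measure R E = 1%E) ->
  tiles_by_Z E ->
  forall xi : R, - (1 / 2) <= xi <= 1 / 2 -> fourier_indic E xi != 0.
Proof.
move=> eps0 mE Esub muE tile xi /andP[xi1 xi2].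
set mu := @lebesgue_measure R.
set e := Num.min eps (1 / 2).
have e0 : 0 < e by rewrite lt_min eps0 /=; lra.
have e2 : e <= 1 / 2 by rewrite ge_min lexx orbT.
have ee : e <= eps by rewrite ge_min lexx.
have Esub' : E `<=` `[0, 3 / 2 - e].
  move=> x /Esub; rewrite /= !in_itv /= => /andP[-> h] /=; lra.
set a := 2 * pi * xi.
set th := a * (1 - e).
set g := fun x => cos (a * x - th).
have pi0 : 0 < pi :> R by exact: pi_gt0.
have na : `|a| <= pi.
  rewrite /a normrM ger0_norm; last by rewrite mulr_ge0 // ltW.
  have : `|xi| <= 1 / 2 by rewrite ler_norml xi1 xi2.
  move=> h; nra.
have cg : continuous g.
  move=> x; apply: continuous_comp; last exact: continuous_cos.
  apply: continuousB; last exact: cst_continuous.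
  apply: continuousM; [exact: cst_continuous | exact: id].
have gb : forall x, `|g x| <= 1 by move=> x; exact: cos_max.
have gge : forall x, -1 <= g x by move=> x; exact: cos_geN1.
have gmono : forall x, 0 <= x -> x <= 1 / 2 - e -> g x <= g (x + 1).
  move=> x x0 x1; rewrite /g -(cos_norm (a * x - th)) -(cos_norm (a * (x + 1) - th)).
  have -> : a * (x + 1) - th = a * (x + e) by rewrite /th; ring.
  have -> : a * x - th = a * (x - 1 + e) by rewrite /th; ring.
  rewrite (normrM a (x + e)) (normrM a (x - 1 + e)) (ger0_norm (_ : 0 <= x + e)); last lra.
  rewrite (ler0_norm (_ : x - 1 + e <= 0)); last lra.
  apply: cos_le.
  - by rewrite mulr_ge0 //; lra.
  - by apply: ler_wpM2l => //; lra.
  - apply: (le_trans _ na); rewrite -[leRHS]mulr1; apply: ler_wpM2l => //; lra.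
have key := @key_ineq R E e g mE Esub' e0 tile cg gge gmono.
have mI : measurable (`[0%R, 1%R[%classic : set R) by exact: measurable_itv.
have muI : mu `[0%R, 1%R[%classic = 1%E.
  by rewrite /mu lebesgue_measure_itv /= lte_fin ltr01 -EFinD subr0.
have Efin : (mu E < +oo)%E by rewrite /mu muE ltry.
have Ifin : (mu `[0%R, 1%R[%classic < +oo)%E by rewrite muI ltry.
have conv D : measurable D -> (mu D < +oo)%E -> mu D = 1%E ->
    (\int[mu]_(x in D) (g x + 1)%:E = \int[mu]_(x in D) (g x)%:E + 1)%E.
  move=> mD Dfin D1.
  under eq_integral do rewrite EFinD.
  rewrite integralD //.
  - by rewrite integral_cst // mul1e; congr (_ + _); exact: D1.
  - exact: intg.
  - apply: (@intg R D (fun _ => 1)) => //; first exact: cst_continuous.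
    by move=> _; rewrite normr1.
rewrite conv // conv // in key.
have iE : mu.-integrable E (EFin \o g) by exact: intg.
have iI : mu.-integrable `[0%R, 1%R[%classic (EFin \o g) by exact: intg.
have key2 : (\int[mu]_(x in `[0%R, 1%R[) (g x)%:E <= \int[mu]_(x in E) (g x)%:E)%E.
  by rewrite -(leeD2rE _ _ (fin_numE 1%E)) .
have mgI : measurable_fun [set` Interval (BLeft (0:R)) (BLeft (1:R))] (EFin \o g).
  by apply/measurable_EFinP; exact: measurable_funS (continuous_measurable_fun cg).
have eqI := integral_itv_bndo_bndc mgI.
have mCI : measurable (`[0%R, 1%R]%classic : set (measurableTypeR R)) by exact: measurable_itv.
have muCI : mu `[0%R, 1%R]%classic = 1%E.
  by rewrite /mu lebesgue_measure_itv /= lte_fin ltr01 -EFinD subr0.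
have iCI : mu.-integrable `[0%R, 1%R]%classic (EFin \o g) by apply: intg => //; rewrite /mu lebesgue_measure_itv /= lte_fin ltr01 ltry.
have finCI : (\int[mu]_(x in `[0%R, 1%R]) (g x)%:E)%E \is a fin_num by exact: integrable_fin_num.
have pos : (0 < \int[mu]_(x in `[0%R, 1%R]) (g x)%:E)%E.
  have [xi0|xin0] := eqVneq xi 0.
    have -> : g = fun _ => 1.
      by apply/funext => x; rewrite /g /th /a xi0 mulr0 !mul0r subr0 cos0.
    by rewrite integral_cst // mul1e (_ : _ `[0%R, 1%R]%classic = 1%E) ?lte_fin //; exact: muCI.
  have an0 : a != 0 by rewrite /a mulf_neq0 // mulf_neq0 // ?pnatr_eq0 // gt_eqF.
  have F := @ftc_lin R a th.
  rewrite -/g in F.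
  move: F; rewrite (integralZr mCI iCI a).
  rewrite -(fineK finCI) -EFinM -EFinB => /(congr1 fine) /=.
  set J := fine _ => HJ.
  have s_eq : sin (a * 1 - th) - sin (a * 0 - th) = sin (a * e) + sin (a * (1 - e)).
    rewrite mulr0 sub0r sinN opprK /th; congr (sin _ + _); ring.
  rewrite s_eq in HJ.
  have sa : 0 < (sin (a * e) + sin (a * (1 - e))) * a.
    have [a0|a0|a0] := ltgtP a 0; last by rewrite a0 eqxx in an0.
    - have na' : - a <= pi by apply: le_trans na; rewrite ler0_norm //; exact: ltW.
      have := @sinpos R (- a) e _ na' e0 e2; rewrite oppr_gt0 => /(_ a0).
      rewrite !mulNr !sinN -opprD => h; nra.
    - apply: mulr_gt0 => //; apply: (@sinpos R) => //.
      by apply: le_trans na; rewrite ger0_norm //; exact: ltW.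
  rewrite -HJ in sa.
  rewrite lte_fin.
  have aa : 0 < a * a by rewrite lt0r mulf_neq0 //=; nra.
  have : 0 < J * (a * a) by rewrite mulrA.
  by rewrite pmulr_lgt0.
have finE : (\int[mu]_(x in E) (g x)%:E)%E \is a fin_num by exact: integrable_fin_num.
have finI : (\int[mu]_(x in `[0%R, 1%R[) (g x)%:E)%E \is a fin_num by exact: integrable_fin_num.
have RE : 0 < Rintegral mu E g.
  rewrite /Rintegral; apply: (lt_le_trans _ (fine_le finI finE key2)).
  have -> : (\int[mu]_(x in `[0%R, 1%R[) (g x)%:E)%E = (\int[mu]_(x in `[0%R, 1%R]) (g x)%:E)%E.
    exact: eqI.
  by apply: fine_gt0; rewrite pos /=; move: finCI; rewrite fin_numElt => /andP[].
set C := Rintegral mu E (fun x => cos (2 * pi * x * xi)).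
set S := Rintegral mu E (fun x => sin (2 * pi * x * xi)).
have ccos : continuous (fun x : R => cos (2 * pi * x * xi)).
  move=> x; apply: continuous_comp; last exact: continuous_cos.
  apply: continuousM; last exact: cst_continuous.
  apply: continuousM; [exact: cst_continuous | exact: id].
have csin : continuous (fun x : R => sin (2 * pi * x * xi)).
  move=> x; apply: continuous_comp; last exact: continuous_sin.
  apply: continuousM; last exact: cst_continuous.
  apply: continuousM; [exact: cst_continuous | exact: id].
have iC : mu.-integrable E (EFin \o (fun x => cos (2 * pi * x * xi))).
  by apply: (@intg R E (fun x : R => cos (2 * pi * x * xi))) => // x; exact: cos_max.
have iS : mu.-integrable E (EFin \o (fun x => sin (2 * pi * x * xi))).
  by apply: (@intg R E (fun x : R => sin (2 * pi * x * xi))) => // x; exact: sin_max.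
have RB : Rintegral mu E g = C * cos th + S * sin th.
  rewrite /g.
  have -> : (fun x => cos (a * x - th)) =
      (fun x => cos (2 * pi * x * xi) * cos th + sin (2 * pi * x * xi) * sin th).
    apply/funext => x; rewrite -cosB; congr (cos (_ - _)); rewrite /a; ring.
  rewrite RintegralD //.
  - by rewrite RintegralZr // RintegralZr.
  - apply: (@intg R E (fun x : R => cos (2 * pi * x * xi) * cos th)) => //.
      by move=> x; apply: continuousM; [exact: ccos | exact: cst_continuous].
    by move=> x; rewrite normrM; apply: mulr_ile1 => //; exact: cos_max.
  - apply: (@intg R E (fun x : R => sin (2 * pi * x * xi) * sin th)) => //.
      by move=> x; apply: continuousM; [exact: csin | exact: cst_continuous].
    by move=> x; rewrite normrM; apply: mulr_ile1 => //; exact: sin_max.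
apply/negP => /eqP H.
have HC := congr1 (@complex.Re R) H.
have HS := congr1 (@complex.Im R) H.
rewrite /fourier_indic /= -/C -/S in HC HS.
move: RE; rewrite RB HC.
have -> : S = 0 by rewrite -[S]opprK HS oppr0.
by rewrite !mul0r addr0 ltxx.
Qed.
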